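(* Consider the discrete-time control system on $\mathrm{Aff}(2,\mathbb{R})$ given by $(x_{k+1},y_{k+1})=f_{u_k}(x_k,y_k)$, $u_k\in U$, where $f_u(x,y)=(h(u)x,\ a(x-1)+dy+g(u)x)$ with $a\in\mathbb{R}$, $d\in\mathbb{R}\setminus\{0\}$, $h:\mathbb{R}^m\to(0,\infty)$ and $g:\mathbb{R}^m\to\mathbb{R}$ smooth with $h(0)=1$, $g(0)=0$, and $U\subset\mathbb{R}^m$ a compact convex neighborhood of $0$. If $-a\,h'(0)\neq g'(0)(d-1)$ and $h'(0)\neq0$, then the system is accessible.
   Context: $\mathrm{Aff}(2,\mathbb{R})$ is $(0,\infty)\times\mathbb{R}$ with product $(x_1,y_1)\cdot(x_2,y_2)=(x_1x_2,\ y_2+x_2y_1)$. Solutions: $\varphi(0,p,u)=p$, $\varphi(k,p,u)=f_{u_{k-1}}\circ\cdots\circ f_{u_0}(p)$ for controls $u=(u_i)\in U^{\mathbb{N}_0}$. For a point $p$, $\mathcal{R}(p)=\bigcup_{k\in\mathbb{N}}\{\varphi(k,p,u)\}$ and $\mathcal{C}(p)=\bigcup_{k\in\mathbb{N}}\{q:\varphi(k,q,u)=p\text{ for some }u\}$. The system is forward accessible if $\mathrm{int}\,\mathcal{R}(p)\neq\emptyset$ for all $p$, backward accessible if $\mathrm{int}\,\mathcal{C}(p)\neq\emptyset$ for all $p$, and accessible if both hold. $h'(0)$, $g'(0)$ are the derivatives at $0$. *)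

(* Defs.v *)
From HB Require Import structures.
From mathcomp Require Import all_boot all_order all_algebra.
From mathcomp Require Import all_classical all_reals all_analysis.
Set Implicit Arguments. Unset Strict Implicit. Unset Printing Implicit Defensive.
Import Order.TTheory GRing.Theory Num.Theory.
Import numFieldNormedType.Exports.
Local Open Scope classical_set_scope.
Local Open Scope ring_scope.

Section Defs.
Variables (R : realType) (m : nat).
Local Notation V := 'rV[R]_m.

Fixpoint iterD (vs : seq V) (f : V -> R) : V -> R :=
  match vs with
  | [::] => f
  | v :: vs' => fun x => derive (iterD vs' f) x v
  end.

Definition smooth (f : V -> R) : Prop :=
  forall vs : seq V,
    continuous (iterD vs f) /\ (forall (x v : V), derivable (iterD vs f) x v).

(* the state space Aff(2,R) = (0,oo) x R, as a subset of R x R *)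
Definition Aff2 : set (R * R) := [set p | 0 < p.1].

Definition fsys (a d : R) (h g : V -> R) (u : V) (p : R * R) : R * R :=
  (h u * p.1, a * (p.1 - 1) + d * p.2 + g u * p.1).

Fixpoint phi (a d : R) (h g : V -> R) (k : nat) (p : R * R) (u : nat -> V)
  : R * R :=
  match k with
  | 0%N => p
  | k'.+1 => fsys a d h g (u k') (phi a d h g k' p u)
  end.

Definition admissible (U : set V) (u : nat -> V) : Prop := forall i, U (u i).

Definition reach_set a d h g (U : set V) (p : R * R) : set (R * R) :=
  [set q | exists k u, (0 < k)%N /\ admissible U u /\ q = phi a d h g k p u].

Definition ctrl_set a d h g (U : set V) (p : R * R) : set (R * R) :=
  [set q | Aff2 q /\
     exists k u, (0 < k)%N /\ admissible U u /\ phi a d h g k q u = p].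

Definition forward_accessible a d h g U : Prop :=
  forall p, Aff2 p -> interior (reach_set a d h g U p) !=set0.
Definition backward_accessible a d h g U : Prop :=
  forall p, Aff2 p -> interior (ctrl_set a d h g U p) !=set0.
Definition accessible a d h g U : Prop :=
  forward_accessible a d h g U /\ backward_accessible a d h g U.

End Defs.

(* Main.v *)
Require Import Defs.
From HB Require Import structures.
From mathcomp Require Import all_boot all_order all_algebra.
From mathcomp Require Import all_classical all_reals all_analysis.
From mathcomp Require Import ring lra.
Import Order.TTheory GRing.Theory Num.Theory.
Import numFieldNormedType.Exports.
Local Open Scope classical_set_scope.
Local Open Scope ring_scope.

Section A.
Variables (R : realType) (m : nat).
Local Notation V := 'rV[R]_m.

Lemma line_is_derive (f : V -> R) (x v : V) (t : R) :
  derivable f (t *: v + x) v ->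
  is_derive t 1 (fun s : R => f (s *: v + x)) ('D_v f (t *: v + x)).
Proof.
move=> df.
have E : (fun h : R => h^-1 *: (((fun s : R => f (s *: v + x)) \o shift t) (h *: 1) - f (t *: v + x)))
   = (fun h => h^-1 *: ((f \o shift (t *: v + x)) (h *: v) - f (t *: v + x))).
  apply/funext => h /=.
  have -> : h *: (1:R) = h by rewrite /GRing.scale /= mulr1.
  by rewrite scalerDl addrA.
split; first by rewrite /derivable E.
by rewrite /derive E.
Qed.

Lemma mvt0 (phi dphi : R -> R) (b : R) :
  (forall s : R, is_derive s 1 phi (dphi s)) ->
  exists c, `|c| <= `|b| /\ phi b - phi 0 = dphi c * b.
Proof.
move=> D.
have C : continuous phi.
  move=> s; apply: differentiable_continuous; apply/derivable1_diffP.
  exact: (@ex_derive _ _ _ _ _ _ _ (D s)).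
case: (leP 0 b) => b0.
  have [c cI E] := MVT_segment b0 (fun s _ => D s) (continuous_subspaceT C).
  exists c; split; last by rewrite E subr0.
  move: cI; rewrite in_itv /= => /andP[c0 cb].
  by rewrite !ger0_norm // (le_trans c0 cb).
have [c cI E] := MVT_segment (ltW b0) (fun s _ => D s) (continuous_subspaceT C).
exists c; split; last by rewrite -opprB E sub0r mulrN opprK.
move: cI; rewrite in_itv /= => /andP[bc c0].
by rewrite !ler0_norm ?lerN2 // ltW.
Qed.

Lemma rV_norm_entry (w : V) k : `|w 0 k| <= `|w|.
Proof.
rewrite -[`|w|]/(mx_norm w) mx_normrE.
exact: (le_bigmax _ (fun ij : 'I_1 * 'I_m => `|w ij.1 ij.2|) (0, k)).
Qed.

Lemma rV_norm_le (x w : V) : (forall k, `|x 0 k| <= `|w 0 k|) -> `|x| <= `|w|.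
Proof.
move=> H; rewrite -[`|x|]/(mx_norm x) mx_normrE.
apply: bigmax_le => [|[i j] _] /=; first exact: normr_ge0.
by rewrite (ord1 i); apply: le_trans (H j) (rV_norm_entry _ _).
Qed.


Lemma C1_differentiable (f : V -> R) :
  (forall x v, derivable f x v) -> (forall v, continuous (fun x => 'D_v f x)) ->
  differentiable f 0.
Proof.
move=> Df Cf.
pose e i : V := delta_mx 0 i.
pose L (w : V) := \sum_i w 0 i * 'D_(e i) f 0.
have linL : linear L.
  move=> k x y; rewrite /L scaler_sumr -big_split /=; apply: eq_bigr => i _.
  by rewrite !mxE /GRing.scale /= mulrDl mulrA.
pose LL : {linear V -> R} := HB.pack L (GRing.isLinear.Build _ _ _ _ L linL).
have cL : continuous L.
  have -> : L = \sum_i (fun w : V => w 0 i * 'D_(e i) f 0).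
    by apply/funext => w; rewrite fct_sumE.
  apply: (big_ind (fun g : V -> R => continuous g)).
  - exact: cst_continuous.
  - move=> g1 g2 c1 c2 x; exact: (continuousD (c1 x) (c2 x)).
  - move=> i _ x; apply: cvgMr_tmp; [exact: nbhs_filter | exact: (@coord_continuous R 1 m 0 i x)].
have oE : f \o shift 0 = cst (f 0) + (LL : _ -> _) +o_ (0 : V) id.
  apply/eqaddoP => _/posnumP[eps].
  pose eps' := eps%:num / (m%:R + 1).
  have e'0 : 0 < eps' by rewrite divr_gt0 // ltr_wpDl.
  have near_all : \forall x \near (0:V), forall i, `|'D_(e i) f 0 - 'D_(e i) f x| <= eps'.
    exact: (@filter_forall _ 'I_m (fun i x => `|'D_(e i) f 0 - 'D_(e i) f x| <= eps') (nbhs (0:V)) _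
      (fun i => cvgr_dist_le _ _ (Cf (e i) 0) _ e'0)).
  move/nbhs_ballP: near_all => [r r0 Hr].
  apply/nbhs_ballP; exists r => // w Bw /=.
  have nw : `|w| < r by move: Bw; rewrite -ball_normE /= sub0r normrN.
  have inB x : `|x| <= `|w| -> forall i, `|'D_(e i) f 0 - 'D_(e i) f x| <= eps'.
    by move=> xw; apply: Hr; rewrite -ball_normE /= sub0r normrN (le_lt_trans xw).
  pose z (k : nat) : V := \row_j (if (j < k)%N then w 0 j else 0).
  have z0 : z 0%N = 0 by apply/rowP => j; rewrite !mxE.
  have zm : z m = w by apply/rowP => j; rewrite !mxE ltn_ord.
  have tel : \sum_(k < m) (f (z k.+1) - f (z k)) = f w - f 0.
    by rewrite -(big_mkord xpredT (fun k => f (z k.+1) - f (z k))) telescope_sumr // zm z0.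
  have zS (k : 'I_m) : z k.+1 = w 0 k *: e k + z k.
    apply/rowP => j; rewrite !mxE /=.
    case: (eqVneq j k) => [->|jk]; first by rewrite ltnSn ltnn mulr1 addr0.
    rewrite mulr0 add0r ltnS leq_eqVlt.
    have -> : (nat_of_ord j == nat_of_ord k) = false by exact: negbTE jk.
    by [].
  have term (k : 'I_m) : `|f (z k.+1) - f (z k) - w 0 k * 'D_(e k) f 0| <= `|w| * eps'.
    have [c [cb E]] := @mvt0 (fun s => f (s *: e k + z k))
      (fun s => 'D_(e k) f (s *: e k + z k)) (w 0 k)
      (fun s => line_is_derive f (z k) (e k) s (Df _ _)).
    rewrite /= scale0r add0r in E.
    rewrite zS E mulrC -mulrBr normrM.
    apply: ler_pM => //; first exact: rV_norm_entry.
    rewrite distrC; apply: inB; apply: rV_norm_le => j.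
    rewrite !mxE /=.
    case: (eqVneq j k) => [->|jk]; first by rewrite ltnn mulr1 addr0.
    rewrite mulr0 add0r; case: ifP => _ //; by rewrite normr0.
  have -> : (f \o +%R^~ 0 - (cst (f 0) + L)) w = (f w - f 0) - L w.
    by rewrite !fctE /= addr0 opprD addrA.
  rewrite -tel /L -sumrB.
  apply: le_trans (ler_norm_sum _ _ _) _.
  apply: le_trans (ler_sum _ (fun k _ => term k)) _.
  rewrite sumr_const card_ord -mulrnAr mulrC.
  apply: ler_wpM2r => //.
  rewrite /eps' -mulr_natr mulrAC ler_pdivrMr ?ltr_wpDl // ler_pM2l // lerDl //.
have cLL : continuous (LL : V -> R) by move=> x; exact: cL x.
have dL : 'd f 0 = LL :> (V -> R) := diff_unique cLL oE.
by apply/diff_locallyP; rewrite dL; split.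
Qed.
End A.

Section B.
Variable R : realType.

Lemma sign_pert (z e c : R) : 0 < z * c -> `|e| < `|z| -> 0 < (z + e) * c.
Proof.
move=> zc ez; rewrite mulrDl.
have : `|e * c| < z * c by rewrite normrM -(gtr0_norm zc) normrM ltr_pM2r // normr_gt0;
  apply: contraTneq zc => ->; rewrite mulr0 ltxx.
by rewrite ltr_norml => /andP[h1 _]; lra.
Qed.

Lemma quot_sign (c q : R) : c != 0 -> `|c - q| < `|c| -> 0 < q * c.
Proof.
move=> c0; rewrite ltr_distlC; case: (ltgtP c 0) c0 => // cs _.
  by rewrite ltr0_norm // => /andP[_ h]; nra.
by rewrite gtr0_norm // => /andP[h _]; nra.
Qed.

Lemma near_mul_lt (rho x l : R) : 0 < rho <= 1 -> `|x - 1| < rho / 2 -> `|l - 1| < rho / 4 ->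
  `|l * x - 1| < rho.
Proof.
move=> /andP[r0 r1] hx hl.
have -> : l * x - 1 = (l - 1) * x + (x - 1) by ring.
apply: le_lt_trans (ler_normD _ _) _.
have nx : `|x| <= 3 / 2.
  have := ler_normD (x - 1) 1; rewrite subrK normr1 => h; lra.
rewrite normrM.
have : `|l - 1| * `|x| <= rho / 4 * (3 / 2) by apply: ler_pM => //; lra.
lra.
Qed.


Lemma local_inverse (H : R -> R) :
  (forall s, derivable H s 1) -> {for 0, continuous ('D_1 H)} -> 'D_1 H 0 != 0 ->
  exists T : R -> R, {near 0, cancel H T}.
Proof.
move=> dH cH a0.
have : \forall s \near (0:R), 'D_1 H s != 0.
  have n0 : 0 < `|'D_1 H 0| by rewrite normr_gt0.
  have K := cvgr_dist_lt _ _ cH _ n0.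
  near=> s. have hs : `|'D_1 H 0 - 'D_1 H s| < `|'D_1 H 0| by near: s; exact: K.
  by apply/eqP => hs0; rewrite hs0 subr0 ltxx in hs.
move/nbhs_ballP => [d1 d1pos Hd1].
have nz s : `|s| < d1 -> 'D_1 H s != 0.
  by move=> hs; apply: Hd1; rewrite -ball_normE /= sub0r normrN.
have cont : continuous H.
  by move=> s; apply: differentiable_continuous; apply/derivable1_diffP.
have inj s1 s2 : `|s1| < d1 -> `|s2| < d1 -> H s1 = H s2 -> s1 = s2.
  wlog lt12 : s1 s2 / s1 <= s2.
    move=> W h1 h2 e; case: (leP s1 s2) => [|/ltW] l; first exact: W.
    by apply/esym/W.
  move=> h1 h2 e; case: (eqVneq s1 s2) => // ne.
  have lt : s1 < s2 by rewrite lt_neqAle ne.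
  have [c cI E] := MVT lt (fun x _ => derivableP (dH x)) (continuous_subspaceT cont).
  rewrite e subrr in E.
  have : 'D_1 H c != 0.
    apply: nz; move: cI; rewrite in_itv /= => /andP[c1 c2].
    move: h1 h2; rewrite !ltr_norml => /andP[h1 _] /andP[_ h2].
    by rewrite (lt_trans h1 c1) (lt_trans c2 h2).
  have : s2 - s1 != 0 by rewrite subr_eq0 eq_sym.
  by move=> n1 n2; have := mulf_neq0 n2 n1; rewrite -E eqxx.
exists (fun y => xget 0 [set s | `|s| < d1 /\ H s = y]).
apply/nbhs_ballP; exists d1 => // s; rewrite -ball_normE /= sub0r normrN => hs.
have [h1 h2] := @xgetPex _ 0 [set s' | `|s'| < d1 /\ H s' = H s] (ex_intro _ s (conj hs erefl)).
exact: inj h1 hs h2.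
Unshelve. all: by end_near.
Qed.


Lemma core (H G : R -> R) (a d d0 : R) :
  (forall s, derivable H s 1) -> (forall s, derivable G s 1) ->
  {for 0, continuous ('D_1 H)} ->
  (forall s, 0 < H s) -> H 0 = 1 -> G 0 = 0 ->
  'D_1 H 0 != 0 -> a * 'D_1 H 0 + (d - 1) * 'D_1 G 0 != 0 -> 0 < d0 ->
  exists2 eps, 0 < eps & forall l w, `|l - 1| < eps -> `|w - a| < eps ->
    exists s t, [/\ `|s| < d0, `|t| < d0, H s * H t = l &
                    a * H s + d * G s + H s * G t = w].
Proof.
move=> dH dG cH Hpos H0 G0 a0 c0 d0pos.
set al := 'D_1 H 0 in a0 c0 *; set be := 'D_1 G 0 in c0 *.
have [T fK] := local_inverse _ dH cH a0.
have contH : continuous H.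
  by move=> s; apply: differentiable_continuous; apply/derivable1_diffP.
have contG : continuous G.
  by move=> s; apply: differentiable_continuous; apply/derivable1_diffP.
have hC : {near 0, continuous H} by near=> x; exact: contH.
have [TC TK] := near_can_continuousAcan_sym fK hC.
have TD : is_derive (H 0) 1 T al^-1 := is_derive_inverse fK hC (derivableP (dH 0)) a0.
rewrite H0 in TC TK TD.
have T1 : T 1 = 0 by rewrite -H0; exact: (nbhs_singleton fK).
have TC1 : {for 1, continuous T} := nbhs_singleton TC.
pose Phi l s := a * H s + d * G s + H s * G (T (l / H s)).
pose c := a * al + (d - 1) * be.
have DPhi : is_derive (0:R) (1:R) (Phi 1) c.
  have H0n : H 0 != 0 by rewrite H0 oner_eq0.
  have D1 : is_derive (0:R) (1:R) (fun y : R => (H y)^-1) (- (H 0) ^- 2 *: al) :=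
    is_deriveV H0n (derivableP (dH 0)).
  have TDi : is_derive ((fun y => (H y)^-1) 0) 1 T al^-1 by rewrite /= H0 invr1.
  have D2 := @is_derive1_comp R T (fun y => (H y)^-1) 0 _ _ TDi D1.
  have GD : is_derive ((T \o (fun y => (H y)^-1)) 0) 1 G be.
    by rewrite /= H0 invr1 T1; exact: derivableP (dG 0).
  have D3 := @is_derive1_comp R G (T \o (fun y => (H y)^-1)) 0 _ _ GD D2.
  have D4 := is_deriveM (derivableP (dH 0)) D3.
  have D5 := is_deriveD (is_deriveD (is_deriveZ a (derivableP (dH 0)))
                                    (is_deriveZ d (derivableP (dG 0)))) D4.
  have -> : Phi 1 = (a \*: H + d \*: G + H * (G \o (T \o (fun y => (H y)^-1)))).
    by apply/funext => s; rewrite /Phi /= div1r.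
  case: D5 => dd vv; split => //; rewrite vv /= H0 invr1 T1 G0 /c.
  have sc (x y : R) : x *: y = x * y by [].
  rewrite -/al -/be expr1n invr1 !sc mulN1r mulrN mulVf // mulrN1 mul1r mul0r addr0.
  ring.
have H0n : H 0 != 0 by rewrite H0 oner_eq0.
have Hn s : H s != 0 by rewrite gt_eqF.
have Phi10 : Phi 1 0 = a.
  by rewrite /Phi H0 G0 divr1 T1 G0 mulr1 mulr0 addr0 mul1r addr0.
have sgn : \forall h \near (0:R)^', 0 < h^-1 * (Phi 1 h - a) * c.
  have cv : (fun h : R => h^-1 *: ((Phi 1 \o shift 0) (h *: 1) - Phi 1 0)) @ 0^' --> c.
    by case: DPhi => dd vv; rewrite -vv; exact: dd.
  have n0 : 0 < `|c| by rewrite normr_gt0.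
  have K := cvgr_dist_lt _ _ cv _ n0.
  near=> h.
  have hq : `|c - h^-1 *: ((Phi 1 \o shift 0) (h *: 1) - Phi 1 0)| < `|c|.
    by near: h; exact: K.
  have e1 : (Phi 1 \o shift 0) (h *: 1) = Phi 1 h.
    by rewrite /= addr0 /GRing.scale /= mulr1.
  by move: hq; rewrite e1 Phi10 => /(quot_sign _ _ c0).
move/nbhs_ballP: sgn => [e e0 He].
have T0near : \forall y \near (1:R), `|T y| < d0.
  have K := cvgr_dist_lt _ _ TC1 _ d0pos.
  near=> y.
  have : `|T 1 - T y| < d0 by near: y; exact: K.
  by rewrite T1 sub0r normrN.
have nearT : \forall y \near (1:R), [/\ {for y, continuous T}, H (T y) = y & `|T y| < d0].
  near=> y; split; near: y; [exact: TC | exact: TK | exact: T0near].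
move/nbhs_ballP: nearT => [r0 r0pos Hr0].
pose rho := Num.min r0 1.
have rhopos : 0 < rho by rewrite lt_min r0pos ltr01.
have rho1 : rho <= 1 by rewrite ge_min lexx orbT.
have goodT y : `|y - 1| < rho -> [/\ {for y, continuous T}, H (T y) = y & `|T y| < d0].
  move=> hy; apply: Hr0; rewrite -ball_normE /= distrC.
  by move: hy; rewrite lt_min => /andP[].
have invC : {for 0, continuous (fun s => (H s)^-1)} := continuousV H0n (contH 0).
have r2pos : 0 < rho / 2 by rewrite divr_gt0.
have : \forall s \near (0:R), `|(H s)^-1 - 1| < rho / 2.
  have K := cvgr_dist_lt _ _ invC _ r2pos.
  near=> s.
  have : `|(H 0)^-1 - (H s)^-1| < rho / 2 by near: s; exact: K.
  by rewrite H0 invr1 distrC.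
move/nbhs_ballP => [r1 r1pos Hr1].
have goodS s : `|s| < r1 -> `|(H s)^-1 - 1| < rho / 2.
  by move=> hs; apply: Hr1; rewrite -ball_normE /= sub0r normrN.
pose delta := Num.min (Num.min e r1) d0 / 2.
have m0 : 0 < Num.min (Num.min e r1) d0 by rewrite !lt_min e0 r1pos d0pos.
have dpos : 0 < delta by rewrite divr_gt0.
have dlt : delta < Num.min (Num.min e r1) d0 by rewrite /delta ltr_pdivrMr // ltr_pMr // ltr1n.
move: (dlt); rewrite !lt_min => /andP[/andP[de dr1] dd0].
have good s : `|s| <= delta -> `|(H s)^-1 - 1| < rho / 2.
  by move=> hs; apply: goodS; apply: le_lt_trans hs dr1.
pose mp := Phi 1 delta; pose mm := Phi 1 (- delta).
have sp : 0 < (mp - a) * c.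
  have := He delta; rewrite -ball_normE /= sub0r normrN gtr0_norm // => /(_ de); rewrite (gt_eqF dpos) => /(_ isT).
  by rewrite -mulrA pmulr_rgt0 ?invr_gt0.
have sm : 0 < (mm - a) * - c.
  have := He (- delta); rewrite -ball_normE /= sub0r opprK gtr0_norm //.
  move=> /(_ de); rewrite oppr_eq0 (gt_eqF dpos) => /(_ isT).
  move=> h; have hi : (- delta)^-1 < 0 by rewrite invrN oppr_lt0 invr_gt0.
  move: h; rewrite -/mm; set X := mm - a; set q := (- delta)^-1 => h; by rewrite mulrN oppr_gt0 -(nmulr_rgt0 _ hi) mulrA.
have nzp : mp - a != 0 by apply: contraTneq sp => ->; rewrite mul0r ltxx.
have nzm : mm - a != 0 by apply: contraTneq sm => ->; rewrite mul0r ltxx.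
pose eta := Num.min `|mp - a| `|mm - a| / 2.
have etapos : 0 < eta by rewrite divr_gt0 // lt_min !normr_gt0 nzp nzm.
have eta2p : eta + eta <= `|mp - a|.
  by rewrite /eta -splitr ge_min lexx.
have eta2m : eta + eta <= `|mm - a|.
  by rewrite /eta -splitr ge_min lexx orbT.
have PhiCl s : `|s| <= delta -> {for 1, continuous (fun l => Phi l s)}.
  move=> hs.
  have c1 : {for 1, continuous (fun l : R => l / H s)}.
    by apply: cvgMr_tmp.
  have c2 : {for (1 / H s), continuous T}.
    have [] := goodT (1 / H s) => //.
    by rewrite div1r; apply: lt_trans (good s hs) _; rewrite ltr_pdivrMr // ltr_pMr // ltr1n.
  have c3 := continuous_comp c1 c2.
  have c4 := continuous_comp c3 (contG _).
  rewrite /Phi; apply: cvgD; first exact: cvg_cst.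
  exact: cvgMl_tmp c4.
have gd1 : `|delta| <= delta by rewrite gtr0_norm.
have gd2 : `|- delta| <= delta by rewrite normrN gtr0_norm.
have r4pos : 0 < rho / 4 by rewrite divr_gt0.
have nearL : \forall l \near (1:R),
    [/\ `|l - 1| < rho / 4, `|Phi l delta - mp| < eta & `|Phi l (- delta) - mm| < eta].
  have K1 := cvgr_dist_lt _ _ (PhiCl _ gd1) _ etapos.
  have K2 := cvgr_dist_lt _ _ (PhiCl _ gd2) _ etapos.
  have K0 : \forall l \near (1:R), `|l - 1| < rho / 4.
    apply/nbhs_ballP; exists (rho / 4) => // y; rewrite -ball_normE /= distrC.
    by [].
  near=> l; split.
  - by near: l; exact: K0.
  - have : `|mp - Phi l delta| < eta by near: l; exact: K1.
    by rewrite distrC.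
  - have : `|mm - Phi l (- delta)| < eta by near: l; exact: K2.
    by rewrite distrC.
move/nbhs_ballP: nearL => [r3 r3pos Hr2].
exists (Num.min r3 eta); first by rewrite lt_min r3pos etapos.
move=> l w; rewrite !lt_min => /andP[hl1 hl2] /andP[_ hw].
have [L1 L2 L3] : [/\ `|l - 1| < rho / 4, `|Phi l delta - mp| < eta &
    `|Phi l (- delta) - mm| < eta].
  by apply: Hr2; rewrite -ball_normE /= distrC.
have goodY s : `|s| <= delta -> `|l / H s - 1| < rho.
  by move=> hs; apply: near_mul_lt => //; [rewrite rhopos rho1 | exact: good].
have PhiCs s : `|s| <= delta -> {for s, continuous (Phi l)}.
  move=> hs.
  have [cT _ _] := goodT _ (goodY s hs).
  have c1 : {for s, continuous (fun x => l / H x)}.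
    by apply: cvgMl_tmp; exact: continuousV (Hn s) (contH s).
  have c3 := continuous_comp c1 cT.
  have c4 := continuous_comp c3 (contG _).
  rewrite /Phi; apply: cvgD; first apply: cvgD.
  - exact: cvgMl_tmp (contH s).
  - exact: cvgMl_tmp (contG s).
  - exact: cvgM (contH s) c4.
have hp : 0 < (Phi l delta - w) * c.
  have -> : Phi l delta - w = (mp - a) + ((Phi l delta - mp) + (a - w)) by rewrite -/mp; ring.
  apply: sign_pert => //; apply: le_lt_trans (ler_normD _ _) _.
  apply: lt_le_trans eta2p; apply: ltrD => //; by rewrite distrC.
have hm : 0 < (Phi l (- delta) - w) * - c.
  have -> : Phi l (- delta) - w = (mm - a) + ((Phi l (- delta) - mm) + (a - w)) by rewrite -/mm; ring.
  apply: sign_pert => //; apply: le_lt_trans (ler_normD _ _) _.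
  apply: lt_le_trans eta2m; apply: ltrD => //; by rewrite distrC.
have mM : Num.min (Phi l (- delta)) (Phi l delta) <= w <= Num.max (Phi l (- delta)) (Phi l delta).
  rewrite ge_min le_max.
  case: (ltgtP c 0) c0 => // cs _.
    have A : Phi l delta < w by nra.
    have B : w < Phi l (- delta) by nra.
    by rewrite (ltW A) (ltW B) orbT.
  have A : w < Phi l delta by nra.
  have B : Phi l (- delta) < w by nra.
  by rewrite (ltW A) (ltW B) orbT.
have ld : - delta <= delta by lra.
have [x xI fx] : exists2 x, x \in `[- delta, delta] & Phi l x = w.
  apply: (@IVT R (Phi l) (- delta) delta w ld _ mM).
  apply: continuous_in_subspaceT => x; rewrite inE /= in_itv /= => /andP[x1 x2].
  by apply: PhiCs; rewrite ler_norml x1 x2.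
have hx : `|x| <= delta.
  by move: xI; rewrite in_itv /= => /andP[x1 x2]; rewrite ler_norml x1 x2.
have [_ HT Tb] := goodT _ (goodY x hx).
exists x, (T (l / H x)); split => //.
- exact: le_lt_trans hx dd0.
- by rewrite HT mulrC divfK.
Unshelve. all: by end_near.
Qed.

End B.


Lemma choose_dir (R : realType) (m : nat) (A B : 'rV[R]_m -> R) (a d : R) :
  (forall x y, A (x + y) = A x + A y) -> (forall x y, B (x + y) = B x + B y) ->
  (fun v => - a * A v) <> (fun v => (d - 1) * B v) -> (fun v => A v) <> (fun _ => 0) ->
  exists v, A v != 0 /\ a * A v + (d - 1) * B v != 0.
Proof.
move=> lA lB h1 h2.
have [v1 /eqP hv1] : exists v1, ~ (- a * A v1 = (d - 1) * B v1).
  by apply/existsNP => K; apply: h1; apply/funext.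
have [v2 /eqP hv2] : exists v2, ~ (A v2 = 0).
  by apply/existsNP => K; apply: h2; apply/funext.
case: (eqVneq (A v1) 0) => Av1; last first.
  exists v1; split => //; apply: contra hv1 => /eqP E.
  by rewrite mulNr eq_sym -subr_eq0 opprK addrC E.
have mm : (d - 1) * B v1 != 0 by move: hv1; rewrite Av1 mulr0 eq_sym.
pose k := a * A v2 + (d - 1) * B v2.
case: (eqVneq (k + (d - 1) * B v1) 0) => kz.
  exists (v1 + v2 + v2); rewrite !lA !lB Av1 add0r; split.
    by rewrite -mulr2n mulrn_eq0 negb_or hv2.
  have -> : a * (A v2 + A v2) + (d - 1) * (B v1 + B v2 + B v2) =
    (k + (d - 1) * B v1) + k by rewrite /k; ring.
  rewrite kz add0r; apply: contra mm => /eqP k0.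
  by move: kz; rewrite k0 add0r => ->.
exists (v1 + v2); rewrite !lA !lB Av1 add0r; split => //.
by have -> : a * A v2 + (d - 1) * (B v1 + B v2) = k + (d - 1) * B v1 by rewrite /k; ring.
Qed.

Lemma line_fun (R : realType) (m : nat) (f : 'rV[R]_m -> R) (v : 'rV[R]_m) :
  (forall x w, derivable f x w) ->
  forall s : R, is_derive s 1 (fun s : R => f (s *: v)) ('D_v f (s *: v)).
Proof.
move=> Df s.
have := @line_is_derive R m f 0 v s (Df _ _).
have E : (fun s0 : R => f (s0 *: v + 0)) = (fun s0 => f (s0 *: v)).
  by apply/funext => s0; rewrite addr0.
by rewrite E addr0.
Qed.

Theorem proposition3p6 (R : realType) (m : nat) (a d : R)
  (h g : 'rV[R]_m -> R) (U : set 'rV[R]_m) :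
  d != 0 ->
  (forall u, 0 < h u) ->
  smooth h -> smooth g ->
  h 0 = 1 -> g 0 = 0 ->
  compact U -> convex_set U -> nbhs (0 : 'rV[R]_m) U ->
  (fun v => - a * 'd h 0 v) <> (fun v => (d - 1) * 'd g 0 v) ->
  (fun v => 'd h 0 v) <> (fun _ => 0) ->
  accessible a d h g U.
Proof.
move=> dn0 hpos sh sg h0 g0 _ _ nU hyp1 hyp2.
have dh : forall x w, derivable h x w := (sh [::]).2.
have dg : forall x w, derivable g x w := (sg [::]).2.
have ch : forall w, continuous (fun x => 'D_w h x) := fun w => (sh [:: w]).1.
have cg : forall w, continuous (fun x => 'D_w g x) := fun w => (sg [:: w]).1.
have Dh : differentiable h 0 := @C1_differentiable R m h dh ch.
have Dg : differentiable g 0 := @C1_differentiable R m g dg cg.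
have [v [hv1 hv2]] := @choose_dir R m ('d h 0) ('d g 0) a d (linearD _) (linearD _) hyp1 hyp2.
have Eh : 'D_v h 0 = 'd h 0 v by apply: deriveE; exact: Dh.
have Eg : 'D_v g 0 = 'd g 0 v by apply: deriveE; exact: Dg.
rewrite -Eh -Eg in hv1 hv2.
pose H s := h (s *: v); pose G s := g (s *: v).
have isH := @line_fun R m h v dh; have isG := @line_fun R m g v dg.
have dH s : derivable H s 1 by case: (isH s).
have dG s : derivable G s 1 by case: (isG s).
have DH s : 'D_1 H s = 'D_v h (s *: v) by case: (isH s).
have DG s : 'D_1 G s = 'D_v g (s *: v) by case: (isG s).
have cH : {for 0, continuous ('D_1 H)}.
  have -> : 'D_1 H = (fun s => 'D_v h (s *: v)) by apply/funext => s; exact: DH.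
  have c1 : {for 0, continuous (fun s : R => s *: v)} := @scalel_continuous R _ v 0.
  have c2 : {for (0:R) *: v, continuous ('D_v h)} := ch v _.
  exact: (continuous_comp c1 c2).
have Hpos s : 0 < H s := hpos _.
have H0 : H 0 = 1 by rewrite /H scale0r h0.
have G0 : G 0 = 0 by rewrite /G scale0r g0.
have al : 'D_1 H 0 != 0 by rewrite DH scale0r.
have cc : a * 'D_1 H 0 + (d - 1) * 'D_1 G 0 != 0 by rewrite DH DG scale0r.
move/nbhs_ballP: nU => [r r0 Ur].
have vpos : 0 < `|v| + 1 by rewrite ltr_wpDl.
pose d0 := r / (`|v| + 1).
have d0pos : 0 < d0 by rewrite divr_gt0.
have inU s : `|s| < d0 -> U (s *: v).
  move=> hs; apply: Ur; rewrite -ball_normE /= sub0r normrN normrZ.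
  apply: le_lt_trans (_ : `|s| * (`|v| + 1) < r).
    by apply: ler_wpM2l; [exact: normr_ge0 | rewrite lerDl; exact: ler01].
  by rewrite -ltr_pdivlMr.
have [eps eps0 Kc] := @core R H G a d d0 dH dG cH Hpos H0 G0 al cc d0pos.
pose u (s t : R) : nat -> 'rV[R]_m := fun i => if i == 0%N then s *: v else t *: v.
have adm s t : `|s| < d0 -> `|t| < d0 -> admissible U (u s t).
  by move=> hs ht [|i] /=; apply: inU.
have phi2 q s t : phi a d h g 2 q (u s t) =
    (H t * (H s * q.1), a * (H s * q.1 - 1) + d * (a * (q.1 - 1) + d * q.2 + G s * q.1)
       + G t * (H s * q.1)) by [].
split.
- move=> [x y] /= xpos.
  have xn0 : x != 0 by rewrite gt_eqF.
  pose cst := - a + d * (a * (x - 1) + d * y).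
  exists (x, cst + a * x); rewrite /interior.
  have F1 : (fun q : R * R => q.1 / x) z @[z --> (x, cst + a * x)] --> x / x.
    by apply: cvgMr_tmp; exact: cvg_fst.
  have F2 : (fun q : R * R => (q.2 - cst) / x) z @[z --> (x, cst + a * x)]
      --> (cst + a * x - cst) / x.
    apply: cvgMr_tmp; apply: cvgB; [exact: cvg_snd | exact: cvg_cst].
  have K1 := cvgr_dist_lt _ _ F1 _ eps0.
  have K2 := cvgr_dist_lt _ _ F2 _ eps0.
  near=> q.
  have h1 : `|q.1 / x - 1| < eps.
    have : `|x / x - q.1 / x| < eps by near: q; exact: K1.
    by rewrite (divff xn0) distrC.
  have h2 : `|(q.2 - cst) / x - a| < eps.
    have : `|(cst + a * x - cst) / x - (q.2 - cst) / x| < eps by near: q; exact: K2.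
    by rewrite addrAC subrr add0r (mulfK xn0) distrC.
  have [s [t [hs ht Hst Hw]]] := Kc _ _ h1 h2.
  exists 2%N, (u s t); split; first by []; split; first exact: (adm s t hs ht).
  rewrite phi2.
  transitivity (q.1, q.2); first exact: surjective_pairing.
  change ((x, y).1) with x; change ((x, y).2) with y.
  congr (_, _).
    by rewrite mulrA (mulrC (H t)) Hst (divfK xn0).
  have E : q.2 = cst + x * (a * H s + d * G s + H s * G t).
    by rewrite Hw mulrC (divfK xn0) addrC subrK.
  by rewrite [LHS]E /cst; ring.
- move=> [X Y] /= Xpos.
  have Xn0 : X != 0 by rewrite gt_eqF.
  pose y0 := (Y - a * X + a - d * a * (X - 1)) / (d * d).
  have dd0 : d * d != 0 by rewrite mulf_neq0.
  pose cq (q : R * R) := - a + d * (a * (q.1 - 1) + d * q.2).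
  exists (X, y0); rewrite /interior.
  have F1 : (fun q : R * R => X * (q.1)^-1) z @[z --> (X, y0)] --> X * X^-1.
    apply: cvgMl_tmp; apply: cvgV; do ?[exact: Xn0 | exact: cvg_fst].
  have F2 : (fun q : R * R => ((Y + a + d * a) - (d * a) * q.1 - (d * d) * q.2) * (q.1)^-1)
      z @[z --> (X, y0)] --> ((Y + a + d * a) - (d * a) * X - (d * d) * y0) * X^-1.
    apply: cvgM.
      apply: cvgB; first apply: cvgB.
      - exact: cvg_cst.
      - apply: cvgMl_tmp; exact: cvg_fst.
      - apply: cvgMl_tmp; exact: cvg_snd.
    apply: cvgV; do ?[exact: Xn0 | exact: cvg_fst].
  have K1 := cvgr_dist_lt _ _ F1 _ eps0.
  have K2 := cvgr_dist_lt _ _ F2 _ eps0.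
  have K3 : \forall q \near (X, y0), 0 < q.1 by exact: (cvgr_gt _ cvg_fst _ Xpos).
  have val2 : ((Y + a + d * a) - (d * a) * X - (d * d) * y0) * X^-1 = a.
    by rewrite /y0; field; rewrite Xn0 dn0.
  near=> q.
  have q1pos : 0 < q.1 by near: q; exact: K3.
  have q1n0 : q.1 != 0 by rewrite gt_eqF.
  have h1 : `|X / q.1 - 1| < eps.
    have : `|X * X^-1 - X * (q.1)^-1| < eps by near: q; exact: K1.
    by rewrite (mulfV Xn0) distrC.
  have h2 : `|(Y - cq q) / q.1 - a| < eps.
    have : `|((Y + a + d * a) - (d * a) * X - (d * d) * y0) * X^-1 -
      ((Y + a + d * a) - (d * a) * q.1 - (d * d) * q.2) * (q.1)^-1| < eps.
      by near: q; exact: K2.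
    rewrite val2 distrC.
    suff -> : (Y - cq q) / q.1 = ((Y + a + d * a) - (d * a) * q.1 - (d * d) * q.2) * (q.1)^-1
      by [].
    by rewrite /cq; congr (_ * _); ring.
  have [s [t [hs ht Hst Hw]]] := Kc _ _ h1 h2.
  split; first exact: q1pos.
  exists 2%N, (u s t); split; first by []; split; first exact: (adm s t hs ht).
  rewrite phi2; congr (_, _).
    by rewrite mulrA (mulrC (H t)) Hst (divfK q1n0).
  have E : Y = cq q + q.1 * (a * H s + d * G s + H s * G t).
    by rewrite Hw mulrC (divfK q1n0) addrC subrK.
  by rewrite [RHS]E /cq; ring.
Unshelve. all: by end_near.
Qed.
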